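(* Let $a$ and $b$ be relatively prime integers with $1<a<b$, let $(u,v)$ be the definitely least solution of $ax+by=1$, let $S=\langle a,b\rangle$ and $h=\min I(S)$. Then there are exactly $|v|$ minimal isolated gaps modulo $a$ of $I(S)$, namely $h,\ h+b,\ \dots,\ h+(|v|-1)b$.
   Context: $\langle a,b\rangle=\{\lambda_1a+\lambda_2b:\lambda_1,\lambda_2\in\mathbb{N}\}$. $I(S)$ is the set of isolated gaps of $S$ ($x\in\mathbb{N}\setminus S$ with $x-1,x+1\in S$), and for $i\in\{1,\dots,a-1\}$, $I_{i,a}(S)=\{s\in I(S):s\equiv i\pmod a\}$. For each $i$ with $I_{i,a}(S)\neq\varnothing$, $h_i=\min I_{i,a}(S)$ is called a minimal isolated gap modulo $a$ of $I(S)$. The definitely least solution $(u,v)$ of $ax+by=1$ is the unique integer solution with $|u|,|v|$ minimal; equivalently the one with $|u|\le b/2$, $|v|\le a/2$. *)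

(* Defs.v *)
From mathcomp Require Import all_boot all_order all_algebra.
Set Implicit Arguments. Unset Strict Implicit. Unset Printing Implicit Defensive.
Import Order.TTheory GRing.Theory Num.Theory.

Definition in_sg2 (a b x : nat) : Prop := exists l1 l2 : nat, x = l1 * a + l2 * b.

Definition isolated_gap (S : nat -> Prop) (x : nat) : Prop :=
  0 < x /\ ~ S x /\ S x.-1 /\ S x.+1.

Definition minimal_isolated_gap_mod (S : nat -> Prop) (a y : nat) : Prop :=
  exists i : nat, [/\ 1 <= i <= a - 1,
    isolated_gap S y /\ y %% a = i &
    forall z, isolated_gap S z -> z %% a = i -> y <= z].

(* Main.v *)
Require Import Defs.
From mathcomp Require Import all_boot all_order all_algebra.
From mathcomp Require Import zify.
Import Order.TTheory GRing.Theory Num.Theory.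
Lemma NS a b x p q: 0 < a -> coprime a b -> 0 < p -> q < a -> x + p*a = q*b -> ~ in_sg2 a b x.
Proof.
move=> a0 co p0 qa E [l1 [l2 Ex]]; subst x.
have le: l2 <= q by nia.
have E2: (l1+p)*a = (q-l2)*b by rewrite mulnBl; lia.
have: a %| (q - l2) * b by rewrite -E2 dvdn_mull.
rewrite Gauss_dvdl //.
case: (posnP (q - l2)) => [H|H] d.
  by move: E2; rewrite H; nia.
by have := dvdn_leq H d; lia.
Qed.

Lemma norm a b y : 0 < a -> in_sg2 a b y -> exists m1 m2, m2 < a /\ y = m1*a + m2*b.
Proof.
move=> a0 [l1 [l2 ->]]; exists (l1 + l2 %/ a * b), (l2 %% a); split; first by rewrite ltn_mod.
rewrite {1}(divn_eq l2 a); nia.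
Qed.

Lemma core a b c w x y z: 1 < a -> 0 < b -> coprime a b -> 0 < w -> w*2 <= a -> c*2 <= b ->
 x + w*b = y + c*a -> z + w*b = x + c*a ->
 (in_sg2 a b y /\ in_sg2 a b z /\ ~ in_sg2 a b x) <->
 (exists q p, [/\ a - w <= q, q < a, 0 < p, p <= c & x + p*a = q*b]).
Proof.
move=> a1 b0 co w0 wa cb Ey Ez; split.
  move=> [Sy [Sz NSx]].
  have [m1 [m2 [m2a Em]]] := @norm a b y (ltnW a1) Sy.
  have m2w : m2 < w.
    rewrite ltnNge; apply/negP => H; apply: NSx.
    exists (m1 + c), (m2 - w); rewrite mulnBl; nia.
  have m1b : m1 + c < b.
    rewrite ltnNge; apply/negP => H; apply: NSx.
    exists (m1 + c - b), (m2 + a - w); rewrite mulnBl mulnBl; nia.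
  exists (m2 + a - w), (b - (m1 + c)).
  have E : x + (b - (m1 + c)) * a = (m2 + a - w) * b by rewrite !mulnBl; nia.
  have pc : b - (m1 + c) <= c.
    rewrite leqNgt; apply/negP => H.
    have : ~ in_sg2 a b z.
      apply: (@NS a b z (b - (m1 + c) - c) (m2 + a - w - w)); first lia; first done; first lia; first lia.
      rewrite !mulnBl; rewrite !mulnBl in E; nia.
    by [].
  split => //; lia.
move=> [q [p [qa1 qa p0 pc E]]].
split; last split.
- exists (b - p - c), (q + w - a); rewrite !mulnBl; nia.
- exists (c - p), (q - w); rewrite !mulnBl; nia.
- exact: (@NS a b x p q (ltnW a1) co p0 qa E).
Qed.

Lemma modeq a b q1 q2 : coprime a b -> q1 < a -> q2 < a -> q1*b = q2*b %[mod a] -> q1 = q2.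
Proof.
move=> co.
wlog le: q1 q2 / q1 <= q2.
  move=> H h1 h2 e; case: (leqP q1 q2) => l; first exact: H.
  by symmetry; apply: H; [exact: ltnW | done | done | by rewrite e].
move=> h1 h2 /eqP e; move: e; rewrite eq_sym eqn_mod_dvd; last by rewrite leq_mul2r le orbT.
rewrite -mulnBl Gauss_dvdl //.
case: (posnP (q2 - q1)) => [H|H] d; first lia.
by have := dvdn_leq H d; lia.
Qed.

Lemma char a b c w x: 1<a -> a<b -> coprime a b -> 0<w -> w*2 <= a -> c*2 <= b ->
  (c*a+1 = w*b \/ w*b+1 = c*a) ->
  isolated_gap (in_sg2 a b) x <->
  (exists q p, [/\ a - w <= q, q < a, 0 < p, p <= c & x + p*a = q*b]).
Proof.
move=> a1 ab co w0 wa cb cas; split.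
  move=> [x0 [nx [Sm Sp]]].
  case: cas => cas.
    by apply/(@core a b c w x x.+1 x.-1) => //; [lia|lia|lia].
  by apply/(@core a b c w x x.-1 x.+1) => //; [lia|lia|lia].
move=> F; have [q [p [q1 q2 p0 pc E]]] := F.
have x0 : 0 < x by case: cas => cas; nia.
case: cas => cas.
  have := (@core a b c w x x.+1 x.-1); rewrite -/(in_sg2 a b).
  move=> /(_ _ _ _ _ _ _ _ _)/iffRL; case/(_ _ _ _ _ _ _ _ _ F) => //; try lia.
  by move=> H1 [H2 H3]; split.
have := (@core a b c w x x.-1 x.+1).
move=> /(_ _ _ _ _ _ _ _ _)/iffRL; case/(_ _ _ _ _ _ _ _ _ F) => //; try lia.
by move=> H1 [H2 H3]; split.
Qed.

Lemma ints a b (u v : int) : 1 < a -> a < b ->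
  (a%:Z * u + b%:Z * v = 1)%R -> (`|u| * 2 <= b)%N -> (`|v| * 2 <= a)%N ->
  0 < `|v| /\ (`|u|*a+1 = `|v|*b \/ `|v|*b+1 = `|u|*a).
Proof.
move=> a1 ab E hu hv.
case: u E hu => un; case: v hv => vn; rewrite /=; try nia.
move=> _; rewrite -!PoszM -PoszD => -[E]; case: un E => [|un]; case: vn => [|vn]; nia.
Qed.

Theorem proposition4p2 (a b : nat) (u v : int) (h : nat) :
  1 < a -> a < b -> coprime a b ->
  (a%:Z * u + b%:Z * v = 1)%R -> (`|u| * 2 <= b)%N -> (`|v| * 2 <= a)%N ->
  isolated_gap (in_sg2 a b) h ->
  (forall x, isolated_gap (in_sg2 a b) x -> h <= x) ->
  (forall y, minimal_isolated_gap_mod (in_sg2 a b) a y <->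
     y \in [seq h + k * b | k <- iota 0 `|v|]) /\
  uniq [seq h + k * b | k <- iota 0 `|v|].
Proof.
move=> a1 ab co E hu hv hI hmin.
have [w0 cas] := @ints a b u v a1 ab E hu hv.
move: hu hv w0 cas; set c := `|u|%N; set w := `|v|%N => hu hv w0 cas.
have key := fun x => @char a b c w x a1 ab co w0 hv hu cas.
have b0 : 0 < b by lia.
have c0 : 0 < c by case: cas => cas; timeout 20 nia.
have Hge : c*a <= (a-w)*b by case: cas => cas; timeout 20 nia.
have hE : h + c*a = (a-w)*b.
  have [q [p [q1 q2 p0 pc Eh]]] := (key h).1 hI.
  have : h <= (a-w)*b - c*a.
    by apply: hmin; apply/key; exists (a-w), c; split => //; lia.
  have : (a-w)*b <= q*b by rewrite leq_mul2r q1 orbT.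
  have : p*a <= c*a by rewrite leq_mul2r pc orbT.
  lia.
split; last first.
  rewrite map_inj_uniq ?iota_uniq // => k1 k2 /eqP.
  by rewrite eqn_add2l eqn_pmul2r // => /eqP.
move=> y; split.
  move=> [i [ir [yI yi] ymin]].
  have [q [p [q1 q2 p0 pc Ey]]] := (key y).1 yI.
  set k := q - (a - w).
  have qb : (a-w)*b <= q*b by rewrite leq_mul2r q1 orbT.
  have pa : p*a <= c*a by rewrite leq_mul2r pc orbT.
  have Ek : h + k*b + c*a = q*b by rewrite /k mulnBl; lia.
  have y'I : isolated_gap (in_sg2 a b) (h + k*b).
    by apply/key; exists q, c; split => //; lia.
  have ym : y %% a = (h + k*b) %% a.
    by rewrite -(modnMDl p y a) -(modnMDl c (h + k*b) a) ![_ * a + _]addnC Ek Ey.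
  have le1 := ymin _ y'I (etrans (esym ym) yi).
  apply/mapP; exists k; first by rewrite mem_iota; lia.
  lia.
move=> /mapP [k]; rewrite mem_iota => kin ->.
have kw : k < w by lia.
have Ek : h + k*b + c*a = (a - w + k)*b by rewrite mulnDl; lia.
have yI : isolated_gap (in_sg2 a b) (h + k*b).
  by apply/key; exists (a - w + k), c; split => //; lia.
exists ((h + k*b) %% a); split => //; first apply/andP; first split.
- rewrite lt0n; apply/negP => /eqP/eqP; rewrite -/(dvdn a _) => d.
  have : a %| (a - w + k) * b.
    by rewrite -Ek dvdn_add // dvdn_mull.
  rewrite Gauss_dvdl // => d2; have := dvdn_leq _ d2; lia.
- have := ltn_mod (h + k*b) a; lia.
- move=> z zI zm.
  have [q [p [q1 q2 p0 pc Ez]]] := (key z).1 zI.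
  have pa : p*a <= c*a by rewrite leq_mul2r pc orbT.
  have : q = a - w + k.
    apply: (@modeq a b _ _ co) => //; first lia.
    by rewrite -Ez -Ek ![_ + _ * a]addnC !modnMDl zm.
  move=> eq; subst q; lia.
Qed.
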